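(* Let $n > 1$. The class of $\mathrm{FP}_n$-injective left $R$-modules is closed under extensions, under direct products, under direct limits, and under pure submodules and pure quotients (i.e. if $0 \to N \to M \to M/N \to 0$ is a pure exact sequence with $M$ $\mathrm{FP}_n$-injective, then $N$ and $M/N$ are $\mathrm{FP}_n$-injective).
   Context: $R$ is an associative ring with unit. For $n \ge 0$, a (left or right) $R$-module is finitely $n$-presented if there is an exact sequence $F_n \to \cdots \to F_0 \to M \to 0$ with every $F_i$ finitely generated free; $\mathrm{FP}_n$ is the class of such modules. A left $R$-module $N$ is $\mathrm{FP}_n$-injective if $\mathrm{Ext}^1_R(F,N)=0$ for every left $R$-module $F \in \mathrm{FP}_n$. *)

(* Defs.v *)
(* left R-modules are [lmodType R] for [R : pzRingType]
   (associative ring with unit, possibly noncommutative). *)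
From HB Require Import structures.
From mathcomp Require Import all_boot all_order all_algebra.
Set Implicit Arguments. Unset Strict Implicit. Unset Printing Implicit Defensive.
Import GRing.Theory.
Local Open Scope ring_scope.

Section ModDefs.
Variable R : pzRingType.

Definition exact_at (A B C : lmodType R) (f : A -> B) (g : B -> C) : Prop :=
  forall y : B, g y = 0 <-> exists x : A, f x = y.

Definition short_exact (A B C : lmodType R)
    (f : {linear A -> B}) (g : {linear B -> C}) : Prop :=
  injective f /\ exact_at f g /\ (forall z : C, exists y : B, g y = z).

(* M is finitely n-presented: there is an exact sequence
   F_n --d_(n-1)--> ... --d_0--> F_0 --e--> M --> 0
   with F_i = R^(k i) finitely generated free (row vectors 'rV[R]_(k i)). *)
Definition FPn (n : nat) (M : lmodType R) : Prop :=
  exists (k : nat -> nat)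
         (d : forall i : nat, {linear 'rV[R]_(k i.+1) -> 'rV[R]_(k i)})
         (e : {linear 'rV[R]_(k 0%N) -> M}),
    (forall z : M, exists y, e y = z) /\
    ((0 < n)%N -> exact_at (d 0%N) e) /\
    (forall i : nat, (i.+1 < n)%N -> exact_at (d i.+1) (d i)).

(* Ext^1_R(F, N) = 0, via Yoneda Ext^1: every extension 0 -> N -> E -> F -> 0
   splits. *)
Definition Ext1_vanishes (F N : lmodType R) : Prop :=
  forall (E : lmodType R) (f : {linear N -> E}) (g : {linear E -> F}),
    short_exact f g -> exists r : {linear E -> N}, forall x : N, r (f x) = x.

Definition FPn_injective (n : nat) (N : lmodType R) : Prop :=
  forall F : lmodType R, FPn n F -> Ext1_vanishes F N.

Definition is_direct_product (I : Type) (M : I -> lmodType R) (P : lmodType R)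
    (p : forall i, {linear P -> M i}) : Prop :=
  (forall y y' : P, (forall i, p i y = p i y') -> y = y') /\
  (forall x : forall i, M i, exists y : P, forall i, p i y = x i).

Definition directed (I : Type) (le : I -> I -> Prop) : Prop :=
  inhabited I /\ (forall i, le i i) /\
  (forall i j k, le i j -> le j k -> le i k) /\
  (forall i j, exists k, le i k /\ le j k).

Definition direct_system (I : Type) (le : I -> I -> Prop) (M : I -> lmodType R)
    (f : forall i j, le i j -> {linear M i -> M j}) : Prop :=
  directed le /\
  (forall i (h : le i i) x, f i i h x = x) /\
  (forall i j k (hij : le i j) (hjk : le j k) (hik : le i k) x,
      f i k hik x = f j k hjk (f i j hij x)).

Definition is_direct_limit (I : Type) (le : I -> I -> Prop) (M : I -> lmodType R)
    (f : forall i j, le i j -> {linear M i -> M j})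
    (L : lmodType R) (u : forall i, {linear M i -> L}) : Prop :=
  (forall i j (h : le i j) x, u j (f i j h x) = u i x) /\
  (forall (X : lmodType R) (g : forall i, {linear M i -> X}),
      (forall i j (h : le i j) x, g j (f i j h x) = g i x) ->
      (exists t : {linear L -> X}, forall i x, t (u i x) = g i x) /\
      (forall t t' : {linear L -> X},
          (forall i x, t (u i x) = g i x) -> (forall i x, t' (u i x) = g i x) ->
          forall y, t y = t' y)).

(* pure short exact sequence: Hom(F, -) preserves exactness for every finitely
   presented F, i.e. every map from a finitely presented module to C lifts
   through g. *)
Definition pure_short_exact (A B C : lmodType R)
    (f : {linear A -> B}) (g : {linear B -> C}) : Prop :=
  short_exact f g /\
  (forall (F : lmodType R), FPn 1 F ->
     forall h : {linear F -> C}, exists h' : {linear F -> B},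
       forall x, g (h' x) = h x).

End ModDefs.

(* Main.v *)
Require Import Defs.
From HB Require Import structures.
From mathcomp Require Import all_boot all_order all_algebra.
From mathcomp Require Import boolp.
Set Implicit Arguments. Unset Strict Implicit. Unset Printing Implicit Defensive.
Import GRing.Theory.
Local Open Scope ring_scope.
Section Quot.
Variable R : pzRingType.

Record submod (V : lmodType R) := Submod {
  sm :> V -> Prop;
  sm0 : sm 0;
  smL : forall a x y, sm x -> sm y -> sm (a *: x + y) }.

Variable V : lmodType R.
Variable S : submod V.

Lemma smD x y : S x -> S y -> S (x + y).
Proof. by move=> ??; rewrite -[x]scale1r; apply: smL. Qed.
Lemma smN x : S x -> S (- x).
Proof. by move=> ?; rewrite -scaleN1r -[_ *: x]addr0; apply: smL => //; apply: sm0. Qed.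
Lemma smZ a x : S x -> S (a *: x).
Proof. by move=> ?; rewrite -[_ *: x]addr0; apply: smL => //; apply: sm0. Qed.

Definition quot := {X : V -> Prop | exists v, X = fun w => S (w - v)}.
HB.instance Definition _ := gen_eqMixin quot.
HB.instance Definition _ := gen_choiceMixin quot.

Definition qpi (v : V) : quot := exist _ (fun w => S (w - v)) (ex_intro _ v erefl).
Definition qrepr (X : quot) : V := projT1 (cid (proj2_sig X)).

Lemma qreprK X : qpi (qrepr X) = X.
Proof.
case: X => X hX; rewrite /qrepr /=; case: (cid hX) => v hv /=.
by apply: eq_exist; rewrite hv.
Qed.

Lemma qpi_eq u v : (qpi u = qpi v) <-> S (u - v).
Proof.
split.
  move=> /(congr1 (@proj1_sig _ _)) /= /(congr1 (fun F => F u)).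
  by rewrite subrr => <-; apply: sm0.
move=> huv; apply: eq_exist; apply: funext => w; apply: propext; split.
  by move=> h; have := smD h huv; rewrite addrA subrK.
by move=> h; have := smD h (smN huv); rewrite opprB addrA subrK.
Qed.

Lemma qpiP (X : quot) : exists v, X = qpi v.
Proof. by exists (qrepr X); rewrite qreprK. Qed.

Definition qadd X Y := qpi (qrepr X + qrepr Y).
Definition qopp X := qpi (- qrepr X).
Definition qscale a X := qpi (a *: qrepr X).
Definition qzero := qpi 0.

Lemma qrepr_pi v : S (qrepr (qpi v) - v).
Proof. by apply/qpi_eq; rewrite qreprK. Qed.

Lemma qaddE u v : qadd (qpi u) (qpi v) = qpi (u + v).
Proof.
apply/qpi_eq; rewrite opprD addrACA; exact: smD (qrepr_pi u) (qrepr_pi v).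
Qed.
Lemma qoppE u : qopp (qpi u) = qpi (- u).
Proof. apply/qpi_eq; have := smN (qrepr_pi u); by rewrite opprB addrC opprK. Qed.
Lemma qscaleE a u : qscale a (qpi u) = qpi (a *: u).
Proof. apply/qpi_eq; have := smZ a (qrepr_pi u); by rewrite scalerBr. Qed.

Lemma qaddA : associative qadd.
Proof.
move=> X Y Z; case: (qpiP X) (qpiP Y) (qpiP Z) => x -> [y ->] [z ->].
by rewrite !qaddE addrA.
Qed.
Lemma qaddC : commutative qadd.
Proof. by move=> X Y; case: (qpiP X) (qpiP Y) => x -> [y ->]; rewrite !qaddE addrC. Qed.
Lemma qadd0 : left_id qzero qadd.
Proof. by move=> X; case: (qpiP X) => x ->; rewrite qaddE add0r. Qed.
Lemma qaddN : left_inverse qzero qopp qadd.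
Proof. by move=> X; case: (qpiP X) => x ->; rewrite qoppE qaddE addNr. Qed.

HB.instance Definition _ := GRing.isZmodule.Build quot qaddA qaddC qadd0 qaddN.

Lemma qscaleA a b X : qscale a (qscale b X) = qscale (a * b) X.
Proof. by case: (qpiP X) => x ->; rewrite !qscaleE scalerA. Qed.
Lemma qscale1 : left_id 1 qscale.
Proof. by move=> X; case: (qpiP X) => x ->; rewrite !qscaleE scale1r. Qed.
Lemma qscaleDr : right_distributive qscale qadd.
Proof.
by move=> a X Y; case: (qpiP X) (qpiP Y) => x -> [y ->]; rewrite qaddE !qscaleE qaddE scalerDr.
Qed.
Lemma qscaleDl X : {morph qscale^~ X: a b / a + b >-> qadd a b}.
Proof. by move=> a b; case: (qpiP X) => x ->; rewrite !qscaleE qaddE scalerDl. Qed.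

HB.instance Definition _ := GRing.Zmodule_isLmodule.Build R quot qscaleA qscale1 qscaleDr qscaleDl.

Lemma qpi_is_linear : linear qpi.
Proof. by move=> a u v; rewrite /= -qaddE -qscaleE. Qed.
HB.instance Definition _ := GRing.isLinear.Build R V quot _ qpi qpi_is_linear.

Lemma qpi0 v : (qpi v = 0) <-> S v.
Proof. by have := qpi_eq v 0; rewrite subr0. Qed.

End Quot.
Section Lin.
Variable R : pzRingType.
Variables (U V : lmodType R) (f : U -> V) (hf : linear f).
Definition lfun (_ : linear f) : U -> V := f.
HB.instance Definition _ := GRing.isLinear.Build R U V *:%R (lfun hf) hf.
End Lin.

Section Tools.
Variable R : pzRingType.

Lemma factor (V F W : lmodType R) (e : {linear V -> F}) (phi : {linear V -> W}) :
  (forall z, exists y, e y = z) -> (forall y, e y = 0 -> phi y = 0) ->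
  exists s : {linear F -> W}, forall y, s (e y) = phi y.
Proof.
move=> es hk; have [sec hsec] := choice es.
have key y y' : e y = e y' -> phi y = phi y'.
  by move=> h; apply/eqP; rewrite -subr_eq0 -linearB; apply/eqP/hk; rewrite linearB h subrr.
have hl : linear (fun z => phi (sec z)).
  move=> a z z'; rewrite -linearP; apply: key; by rewrite linearP !hsec.
exists (lfun hl) => y /=; rewrite /lfun; apply: key; exact: hsec.
Qed.

Definition rvmap (k : nat) (W : lmodType R) (b : 'I_k -> W) (x : 'rV[R]_k) : W :=
  \sum_(j < k) x 0 j *: b j.

Lemma rvmap_lin k (W : lmodType R) (b : 'I_k -> W) : linear (rvmap b).
Proof.
move=> a x y; rewrite /rvmap scaler_sumr -big_split /=; apply: eq_bigr => j _.
by rewrite !mxE scalerDl scalerA.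
Qed.

Lemma lin_rv_ext k (W : lmodType R) (t t' : {linear 'rV[R]_k -> W}) :
  (forall j, t (delta_mx 0 j) = t' (delta_mx 0 j)) -> forall x, t x = t' x.
Proof.
move=> h x; rewrite (row_sum_delta x) !linear_sum; apply: eq_bigr => j _.
by rewrite !linearZ h.
Qed.

Lemma rvmap_delta k (W : lmodType R) (b : 'I_k -> W) j : rvmap b (delta_mx 0 j) = b j.
Proof.
rewrite /rvmap (bigD1 j) //= big1 ?addr0.
  by rewrite mxE !eqxx scale1r.
by move=> i hi; rewrite mxE eqxx /= (negbTE hi) scale0r.
Qed.

Lemma rv_eq k (W : lmodType R) (t : {linear 'rV[R]_k -> W}) x : rvmap (fun j => t (delta_mx 0 j)) x = t x.
Proof.
by apply: (@lin_rv_ext _ _ (lfun (rvmap_lin _)) t) => j; rewrite /= /lfun rvmap_delta.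
Qed.

Lemma free_lift k (B C : lmodType R) (g : {linear B -> C}) (t : {linear 'rV[R]_k -> C}) :
  (forall z, exists y, g y = z) -> exists t' : {linear 'rV[R]_k -> B}, forall x, g (t' x) = t x.
Proof.
move=> gs; have [sec hsec] := choice gs.
exists (lfun (rvmap_lin (fun j => sec (t (delta_mx 0 j))))) => x.
rewrite /= /lfun /rvmap linear_sum -rv_eq /rvmap; apply: eq_bigr => j _.
by rewrite linearZ hsec.
Qed.
End Tools.

Section Char.
Variable R : pzRingType.

Lemma pairE (A B : lmodType R) a (u v : A) (w z : B) :
  (a *: u + v, a *: w + z) = a *: (u, w) + (v, z).
Proof. by []. Qed.
Lemma pairB (A B : lmodType R) (u v : A) (w z : B) : (u, w) - (v, z) = (u - v, w - z).
Proof. by []. Qed.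

Lemma inj_factor (V N E : lmodType R) (f : {linear N -> E}) (psi : {linear V -> E}) :
  injective f -> (forall v, exists a, f a = psi v) ->
  exists h : {linear V -> N}, forall v, f (h v) = psi v.
Proof.
move=> fi hex; have [h hh] := choice hex.
have hl : linear h by move=> a u v; apply: fi; rewrite linearP !hh linearP.
by exists (lfun hl).
Qed.

Definition ext_cond (k1 k0 : nat) (d0 : {linear 'rV[R]_k1 -> 'rV[R]_k0}) (N : lmodType R) :=
  forall h : {linear 'rV[R]_k1 -> N}, (forall x, d0 x = 0 -> h x = 0) ->
  exists t : {linear 'rV[R]_k0 -> N}, forall x, t (d0 x) = h x.

Lemma ext_of_cond (k1 k0 : nat) (d0 : {linear 'rV[R]_k1 -> 'rV[R]_k0}) (F N : lmodType R)
  (e : {linear 'rV[R]_k0 -> F}) :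
  (forall z, exists y, e y = z) -> exact_at d0 e -> ext_cond d0 N -> Ext1_vanishes F N.
Proof.
move=> es ex hc E f g [fi [fgex gs]].
have [phi hphi] := free_lift e gs.
have ed0 x : e (d0 x) = 0 by apply/ex; exists x.
have [h hh] : exists h : {linear 'rV[R]_k1 -> N}, forall x, f (h x) = phi (d0 x).
  have hl : linear (fun x => phi (d0 x)) by move=> a u v; rewrite !linearP.
  apply: (inj_factor (psi := lfun hl)) => // v; apply/fgex.
  by rewrite /= /lfun hphi.
have [t ht] : exists t : {linear 'rV[R]_k0 -> N}, forall x, t (d0 x) = h x.
  apply: hc => x hx; apply: fi; rewrite hh hx !linear0 //.
have hl' : linear (fun y => phi y - f (t y)).
  by move=> a u v /=; rewrite linearP [t _]linearP [f _]linearP scalerBr addrACA opprD.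
have [s hs] : exists s : {linear F -> E}, forall y, s (e y) = lfun hl' y.
  apply: factor => // y /ex [x <-]; by rewrite /= /lfun ht hh subrr.
have gs_id z : g (s z) = z.
  have [y <-] := es z; rewrite hs /= /lfun linearB hphi.
  have -> : g (f (t y)) = 0 by apply/fgex; exists (t y).
  by rewrite subr0.
have hl2 : linear (fun y => y - s (g y)).
  by move=> a u v /=; rewrite [g _]linearP [s _]linearP scalerBr addrACA opprD.
have [r hr] : exists r : {linear E -> N}, forall y, f (r y) = lfun hl2 y.
  apply: inj_factor => // y; apply/fgex; by rewrite /= /lfun linearB gs_id subrr.
exists r => a; apply: fi; rewrite hr /= /lfun.
have -> : g (f a) = 0 by apply/fgex; exists a.
by rewrite linear0 subr0.
Qed.

Lemma cond_of_ext (k1 k0 : nat) (d0 : {linear 'rV[R]_k1 -> 'rV[R]_k0}) (F N : lmodType R)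
  (e : {linear 'rV[R]_k0 -> F}) :
  (forall z, exists y, e y = z) -> exact_at d0 e -> Ext1_vanishes F N -> ext_cond d0 N.
Proof.
move=> es ex hE h hk.
pose P := (N * 'rV[R]_k0)%type.
pose S0 := fun p : P => exists x, p = (h x, - d0 x).
have S00 : S0 0.
  by exists 0; rewrite !linear0.
have S0L : forall a x y, S0 x -> S0 y -> S0 (a *: x + y).
  move=> a _ _ [x ->] [y ->]; exists (a *: x + y).
  by rewrite [h (_ + _)]linearP [d0 (_ + _)]linearP opprD -scalerN.
pose S := Submod S00 S0L.
pose E := quot S.
have fl : linear (fun a : N => qpi S (a, 0)).
  move=> a u v /=; rewrite -linearP; congr qpi.
  by rewrite -pairE scaler0 addr0.
pose f := lfun fl.
have ed0 x : e (d0 x) = 0 by apply/ex; exists x.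
have gl : linear (fun p : P => e p.2) by move=> a u v /=; rewrite linearP.
have [g hg] : exists g : {linear E -> F}, forall p, g (qpi S p) = lfun gl p.
  apply: factor; first by move=> z; exists (qrepr z); apply: qreprK.
  by move=> p /qpi0 [x ->]; rewrite /= /lfun linearN ed0 oppr0.
have fi : injective f.
  move=> a b /qpi_eq [x hx].
  have hx2 : d0 x = 0.
    by move: (congr1 snd hx) => /=; rewrite subr0 => /eqP; rewrite eq_sym oppr_eq0 => /eqP.
  move: (congr1 fst hx) => /=; rewrite hk // => /eqP; rewrite subr_eq0 => /eqP //.
have fgex : exact_at f g.
  move=> y; have [p ->] := qpiP y; rewrite hg /= /lfun; split.
    move=> /ex [x hx]; exists (p.1 + h x); apply/qpi_eq; exists x.
    case: p hx => p1 p2 /= hx; rewrite pairB hx sub0r; congr pair.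
    by rewrite addrAC subrr add0r.
  move=> [a ha]; have := congr1 g ha; rewrite /f /= /lfun !hg /= /lfun linear0.
  by move=> ->.
have gs : forall z, exists y, g y = z.
  move=> z; have [y <-] := es z; exists (qpi S (0, y)); by rewrite hg.
have [r hr] := hE E f g (conj fi (conj fgex gs)).
have tl : linear (fun y : 'rV[R]_k0 => r (qpi S (0, y))).
  move=> a u v /=; rewrite -linearP; apply: f_equal; rewrite -linearP; congr qpi.
  by rewrite -pairE scaler0 addr0.
exists (lfun tl) => x /=; rewrite /lfun -[RHS](hr (h x)) /f /= /lfun; apply: f_equal.
apply/qpi_eq; exists (- x).
by rewrite pairB [h (- _)]linearN [d0 (- _)]linearN !opprK sub0r subr0.
Qed.
End Char.
Section Parts.
Variable R : pzRingType.

Lemma cond_ext (k1 k0 : nat) (d0 : {linear 'rV[R]_k1 -> 'rV[R]_k0})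
  (A B C : lmodType R) (f : {linear A -> B}) (g : {linear B -> C}) :
  short_exact f g -> ext_cond d0 A -> ext_cond d0 C -> ext_cond d0 B.
Proof.
move=> [fi [fgex gs]] hA hC h hk.
have gl : linear (fun x => g (h x)) by move=> a u v /=; rewrite !linearP.
have [tC htC] : exists tC : {linear 'rV[R]_k0 -> C}, forall x, tC (d0 x) = lfun gl x.
  by apply: hC => x hx; rewrite /= /lfun hk // linear0.
have [t' ht'] := free_lift tC gs.
have psil : linear (fun x => h x - t' (d0 x)).
  by move=> a u v /=; rewrite [h _]linearP [d0 _]linearP [t' _]linearP scalerBr addrACA opprD.
have [hA' hhA] : exists hA' : {linear 'rV[R]_k1 -> A}, forall x, f (hA' x) = lfun psil x.
  apply: inj_factor => // x; apply/fgex; rewrite /= /lfun linearB ht' htC /= /lfun.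
  by rewrite subrr.
have [tA htA] : exists tA : {linear 'rV[R]_k0 -> A}, forall x, tA (d0 x) = hA' x.
  apply: hA => x hx; apply: fi; rewrite hhA /= /lfun hx linear0 hk // subr0.
  by rewrite linear0.
have tl : linear (fun y => t' y + f (tA y)).
  by move=> a u v /=; rewrite [t' _]linearP [tA _]linearP [f _]linearP scalerDr addrACA.
exists (lfun tl) => x; rewrite /= /lfun htA hhA /= /lfun.
by rewrite addrC subrK.
Qed.

Lemma cond_prod (k1 k0 : nat) (d0 : {linear 'rV[R]_k1 -> 'rV[R]_k0})
  (I : Type) (M : I -> lmodType R) (P : lmodType R) (p : forall i, {linear P -> M i}) :
  is_direct_product p -> (forall i, ext_cond d0 (M i)) -> ext_cond d0 P.
Proof.
move=> [pinj psurj] hM h hk.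
have hl i : linear (fun x => p i (h x)) by move=> a u v /=; rewrite !linearP.
have ex i : exists t : {linear 'rV[R]_k0 -> M i}, forall x, t (d0 x) = p i (h x).
  have [|t ht] := hM i (lfun (hl i)); first by move=> x hx; rewrite /= /lfun hk // linear0.
  by exists t.
pose ts i := projT1 (cid (ex i)).
have hts i x : ts i (d0 x) = p i (h x) by rewrite /ts; case: (cid (ex i)).
have [T hT] := choice (fun y => psurj (fun i => ts i y)).
have Tl : linear T.
  move=> a u v; apply: pinj => i; by rewrite !linearP !hT linearP.
exists (lfun Tl) => x; apply: pinj => i; by rewrite /= /lfun hT hts.
Qed.


Lemma cond_pure_sub (k1 k0 : nat) (d0 : {linear 'rV[R]_k1 -> 'rV[R]_k0}) (F : lmodType R)
  (e : {linear 'rV[R]_k0 -> F}) (N M Q : lmodType R) (f : {linear N -> M}) (g : {linear M -> Q}) :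
  (forall z, exists y, e y = z) -> exact_at d0 e -> FPn 1 F ->
  pure_short_exact f g -> ext_cond d0 M -> ext_cond d0 N.
Proof.
move=> es ex F1 [[fi [fgex gs]] pure] hM h hk.
have fhl : linear (fun x => f (h x)) by move=> a u v /=; rewrite !linearP.
have [tM htM] : exists tM : {linear 'rV[R]_k0 -> M}, forall x, tM (d0 x) = lfun fhl x.
  by apply: hM => x hx; rewrite /= /lfun hk // linear0.
have gtl : linear (fun y => g (tM y)) by move=> a u v /=; rewrite !linearP.
have [s hs] : exists s : {linear F -> Q}, forall y, s (e y) = lfun gtl y.
  apply: factor => // y /ex [x <-]; rewrite /= /lfun htM /= /lfun.
  by apply/fgex; exists (h x).
have [s' hs'] := pure F F1 s.
have psil : linear (fun y => tM y - s' (e y)).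
  by move=> a u v /=; rewrite [tM _]linearP [e _]linearP [s' _]linearP scalerBr addrACA opprD.
have [t ht] : exists t : {linear 'rV[R]_k0 -> N}, forall y, f (t y) = lfun psil y.
  apply: inj_factor => // y; apply/fgex; rewrite /= /lfun linearB hs' hs /= /lfun.
  by rewrite subrr.
exists t => x; apply: fi; rewrite ht /= /lfun htM /= /lfun.
have -> : e (d0 x) = 0 by apply/ex; exists x.
by rewrite !linear0 ?subr0 ?addr0.
Qed.

Lemma cond_pure_quot (k : nat -> nat) (d : forall i, {linear 'rV[R]_(k i.+1) -> 'rV[R]_(k i)})
  (N M Q : lmodType R) (f : {linear N -> M}) (g : {linear M -> Q}) :
  exact_at (d 1%N) (d 0%N) ->
  pure_short_exact f g -> ext_cond (d 0%N) M -> ext_cond (d 0%N) Q.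
Proof.
move=> ex1 [[fi [fgex gs]] pure] hM h hk.
pose S0 := fun y : 'rV[R]_(k 1%N) => d 0%N y = 0.
have S00 : S0 0 by rewrite /S0 linear0.
have S0L : forall a x y, S0 x -> S0 y -> S0 (a *: x + y).
  by move=> a x y; rewrite /S0 linearP => -> ->; rewrite scaler0 addr0.
pose S := Submod S00 S0L.
have K1 : FPn 1 (quot S).
  exists (fun i => k i.+1), (fun i => d i.+1), (qpi S); split; first by move=> z; have [v ->] := qpiP z; exists v.
  split=> // _ y; rewrite qpi0 /=; exact: ex1.
have [hb hhb] : exists hb : {linear quot S -> Q}, forall y, hb (qpi S y) = h y.
  apply: factor; first by move=> z; have [v ->] := qpiP z; exists v.
  by move=> y /qpi0 /hk.
have [h2 hh2] := pure _ K1 hb.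
have Hl : linear (fun y => h2 (qpi S y)) by move=> a u v /=; rewrite !linearP.
have [tM htM] : exists tM : {linear 'rV[R]_(k 0%N) -> M}, forall x, tM (d 0%N x) = lfun Hl x.
  apply: hM => x hx; rewrite /= /lfun.
  have -> : qpi S x = 0 by apply/qpi0.
  by rewrite linear0.
have tl : linear (fun y => g (tM y)) by move=> a u v /=; rewrite !linearP.
by exists (lfun tl) => x; rewrite /= /lfun htM /= /lfun hh2 hhb.
Qed.

End Parts.
Section DProd.
Variable R : pzRingType.
Variables (I : Type) (M : I -> lmodType R).
Definition dprod := forall i, M i.
HB.instance Definition _ := gen_eqMixin dprod.
HB.instance Definition _ := gen_choiceMixin dprod.
Definition dadd (x y : dprod) : dprod := fun i => x i + y i.
Definition dopp (x : dprod) : dprod := fun i => - x i.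
Definition dzero : dprod := fun i => 0.
Definition dscale a (x : dprod) : dprod := fun i => a *: x i.
Lemma daddA : associative dadd.
Proof. by move=> x y z; apply: functional_extensionality_dep => i; rewrite /dadd addrA. Qed.
Lemma daddC : commutative dadd.
Proof. by move=> x y; apply: functional_extensionality_dep => i; rewrite /dadd addrC. Qed.
Lemma dadd0 : left_id dzero dadd.
Proof. by move=> x; apply: functional_extensionality_dep => i; rewrite /dadd add0r. Qed.
Lemma daddN : left_inverse dzero dopp dadd.
Proof. by move=> x; apply: functional_extensionality_dep => i; rewrite /dadd addNr. Qed.
HB.instance Definition _ := GRing.isZmodule.Build dprod daddA daddC dadd0 daddN.
Lemma dscaleA a b x : dscale a (dscale b x) = dscale (a * b) x.
Proof. by apply: functional_extensionality_dep => i; rewrite /dscale scalerA. Qed.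
Lemma dscale1 : left_id 1 dscale.
Proof. by move=> x; apply: functional_extensionality_dep => i; rewrite /dscale scale1r. Qed.
Lemma dscaleDr : right_distributive dscale dadd.
Proof. by move=> a x y; apply: functional_extensionality_dep => i; rewrite /dscale /dadd scalerDr. Qed.
Lemma dscaleDl x : {morph dscale^~ x: a b / a + b >-> dadd a b}.
Proof. by move=> a b; apply: functional_extensionality_dep => i; rewrite /dscale /dadd scalerDl. Qed.
HB.instance Definition _ := GRing.Zmodule_isLmodule.Build R dprod dscaleA dscale1 dscaleDr dscaleDl.
Lemma dprodE (a : R) (x y : dprod) i : (a *: x + y) i = a *: x i + y i.
Proof. by []. Qed.
Lemma dprodB (x y : dprod) i : (x - y) i = x i - y i.
Proof. by []. Qed.
Lemma dprod0 i : (0 : dprod) i = 0.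
Proof. by []. Qed.
End DProd.

Section DL.
Variable R : pzRingType.
Variables (I : Type) (le : I -> I -> Prop) (M : I -> lmodType R)
  (f : forall i j, le i j -> {linear M i -> M j}) (L : lmodType R) (u : forall i, {linear M i -> L}).
Hypothesis hds : direct_system f.
Hypothesis hdl : is_direct_limit f u.

Lemma dl_refl i : le i i. Proof. by case: hds => [[_ [? _]] _]. Qed.
Lemma dl_trans i j k : le i j -> le j k -> le i k. Proof. by case: hds => [[_ [_ [? _]]] _]; eauto. Qed.
Lemma dl_ub i j : exists k, le i k /\ le j k. Proof. by case: hds => [[_ [_ [_ ?]]] _]. Qed.
Lemma dl_inh : inhabited I. Proof. by case: hds => [[? _] _]. Qed.
Lemma dl_comp i j k (hij : le i j) (hjk : le j k) (hik : le i k) x :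
  f hik x = f hjk (f hij x).
Proof. by case: hds => _ [_ ?]; eauto. Qed.
Lemma dl_compat i j (h : le i j) x : u j (f h x) = u i x.
Proof. by case: hdl. Qed.

Lemma dl_ub_nat (idx : nat -> I) n : exists i0, forall j, (j < n)%N -> le (idx j) i0.
Proof.
elim: n => [|n [i0 hi0]].
  by case: dl_inh => i; exists i.
have [k [h1 h2]] := dl_ub i0 (idx n); exists k => j; rewrite ltnS leq_eqVlt.
by case/orP => [/eqP -> // | /hi0 hj]; apply: dl_trans hj h1.
Qed.

Lemma dl_ub_ord m (idx : 'I_m -> I) : exists i0, forall j, le (idx j) i0.
Proof.
case: dl_inh => i1.
pose idx' n := if (insub n : option 'I_m) is Some j then idx j else i1.
have [i0 hi0] := dl_ub_nat idx' m; exists i0 => j.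
by have := hi0 _ (ltn_ord j); rewrite /idx' valK.
Qed.

Lemma dl_surj yy : exists i x, u i x = yy.
Proof.
pose S0 := fun y : L => exists i x, u i x = y.
have S00 : S0 0 by case: dl_inh => i; exists i, 0; rewrite linear0.
have S0L : forall a x y, S0 x -> S0 y -> S0 (a *: x + y).
  move=> a _ _ [i [x <-]] [j [y0 <-]]; have [k [hi hj]] := dl_ub i j.
  exists k, (a *: f hi x + f hj y0); by rewrite linearP !dl_compat.
pose S := Submod S00 S0L.
have zl : forall (i : I), linear (fun _ : M i => (0 : quot S)).
  by move=> i a x y; rewrite scaler0 addr0.
have zl' : linear (fun _ : L => (0 : quot S)) by move=> a x y; rewrite scaler0 addr0.
case: hdl => _ /(_ (quot S) (fun i => lfun (zl i))) [] // _ uniq.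
have e : qpi S yy = lfun zl' yy.
  apply: (uniq (qpi S) (lfun zl')) => i x //.
  by rewrite /= /lfun; apply/qpi0; exists i, x.
by move/qpi0: e.
Qed.

Definition germ i (x : M i) : dprod M :=
  fun j => match pselect (le i j) with left h => f h x | right _ => 0 end.

Lemma germE i j (h : le i j) x : germ x j = f h x.
Proof. by rewrite /germ; case: pselect => // h'; rewrite (Prop_irrelevance h h'). Qed.

Lemma germ_lin i : linear (@germ i).
Proof.
move=> a x y; apply: functional_extensionality_dep => j.
rewrite dprodE /germ; case: pselect => h; first by rewrite linearP.
by rewrite scaler0 addr0.
Qed.

Lemma dl_zero i x : u i x = 0 -> exists j (h : le i j), f h x = 0.
Proof.
move=> hx.
pose Z0 := fun p : dprod M => exists k0, forall j, le k0 j -> p j = 0.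
have Z00 : Z0 0 by case: dl_inh => i1; exists i1.
have Z0L : forall a x y, Z0 x -> Z0 y -> Z0 (a *: x + y).
  move=> a p q [k1 h1] [k2 h2]; have [k [hk1 hk2]] := dl_ub k1 k2.
  exists k => j hj; rewrite dprodE h1 ?h2 ?scaler0 ?addr0 //; exact: dl_trans hj.
pose Z := Submod Z00 Z0L.
have gl : forall i, linear (fun x : M i => qpi Z (germ x)).
  by move=> i0 a y z; rewrite germ_lin linearP.
case: hdl => _ /(_ (quot Z) (fun i => lfun (gl i))) [].
  move=> i0 j h y; rewrite /= /lfun; apply/qpi_eq; exists j => l hl.
  by rewrite dprodB (germE hl) (germE (dl_trans h hl)) (dl_comp h hl (dl_trans h hl)) subrr.
move=> [t ht] _.
have := ht i x; rewrite hx linear0 /= /lfun => /esym /qpi0 [k0 hk0].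
have [j [hij hkj]] := dl_ub i k0.
by exists j, hij; rewrite -(germE hij) hk0.
Qed.
End DL.

Section DLmain.
Variable R : pzRingType.

Lemma cond_dirlim (k : nat -> nat) (d : forall i, {linear 'rV[R]_(k i.+1) -> 'rV[R]_(k i)})
  (I : Type) (le : I -> I -> Prop) (M : I -> lmodType R)
  (f : forall i j, le i j -> {linear M i -> M j}) (L : lmodType R) (u : forall i, {linear M i -> L}) :
  exact_at (d 1%N) (d 0%N) -> direct_system f -> is_direct_limit f u ->
  (forall i, ext_cond (d 0%N) (M i)) -> ext_cond (d 0%N) L.
Proof.
move=> ex1 hds hdl hM h hk.
have ex j : exists p : {i : I & M i}, u (projT1 p) (projT2 p) = h (delta_mx 0 j).
  have [i [x hx]] := dl_surj hds hdl (h (delta_mx 0 j)); by exists (existT _ i x).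
have [pj hpj] := choice ex.
have [i0 hi0] := dl_ub_ord hds (fun j => projT1 (pj j)).
pose b j := f _ _ (hi0 j) (projT2 (pj j)).
pose hi := lfun (rvmap_lin b).
have hih x : u i0 (hi x) = h x.
  have ul : linear (fun x => u i0 (hi x)) by move=> a y z; rewrite [hi _]linearP linearP.
  have H : forall j, lfun ul (delta_mx 0 j) = h (delta_mx 0 j).
    by move=> j; rewrite /= /lfun /hi /= /lfun rvmap_delta /b dl_compat // hpj.
  by move: (lin_rv_ext H x); rewrite /= /lfun.
have ez l : exists p : {jl : I & le i0 jl}, f _ _ (projT2 p) (hi (d 1%N (delta_mx 0 l))) = 0.
  have [|jl [hl hjl]] := dl_zero hds hdl (x := hi (d 1%N (delta_mx 0 l))).
    by rewrite hih; apply: hk; apply/ex1; exists (delta_mx 0 l).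
  by exists (existT _ jl hl).
have [pl hpl] := choice ez.
have [j1 hj1] := dl_ub_ord hds (fun l => projT1 (pl l)).
have [jj [h0 h1]] := dl_ub hds i0 j1.
have hjl : linear (fun x => f _ _ h0 (hi x)) by move=> a y z; rewrite [hi _]linearP linearP.
have [tj htj] : exists tj : {linear 'rV[R]_(k 0%N) -> M jj}, forall x, tj (d 0%N x) = lfun hjl x.
  apply: hM => y /ex1 [z <-].
  have cl : linear (fun z => lfun hjl (d 1%N z)) by move=> a y1 z1 /=; rewrite !linearP.
  have zl : linear (fun _ : 'rV[R]_(k 2%N) => (0 : M jj)) by move=> a y1 z1; rewrite scaler0 addr0.
  have H : forall l, lfun cl (delta_mx 0 l) = lfun zl (delta_mx 0 l).
    move=> l; rewrite /= /lfun; have hle := dl_trans hds (hj1 l) h1.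
    by rewrite (dl_comp hds (projT2 (pl l)) hle h0) hpl linear0.
  by move: (lin_rv_ext H z); rewrite /= /lfun.
have tl : linear (fun y => u jj (tj y)) by move=> a y z /=; rewrite !linearP.
exists (lfun tl) => x; rewrite /= /lfun htj /= /lfun dl_compat //.
Qed.
End DLmain.

Unset Implicit Arguments.
Theorem proposition3p10 (R : pzRingType) (n : nat) (hn : (1 < n)%N) :
  (* closed under extensions *)
  (forall (A B C : lmodType R) (f : {linear A -> B}) (g : {linear B -> C}),
      short_exact f g -> FPn_injective n A -> FPn_injective n C ->
      FPn_injective n B) /\
  (* closed under direct products *)
  (forall (I : Type) (M : I -> lmodType R) (P : lmodType R)
          (p : forall i, {linear P -> M i}),
      is_direct_product p -> (forall i, FPn_injective n (M i)) ->
      FPn_injective n P) /\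
  (* closed under direct limits *)
  (forall (I : Type) (le : I -> I -> Prop) (M : I -> lmodType R)
          (f : forall i j, le i j -> {linear M i -> M j})
          (L : lmodType R) (u : forall i, {linear M i -> L}),
      direct_system f -> is_direct_limit f u ->
      (forall i, FPn_injective n (M i)) -> FPn_injective n L) /\
  (* closed under pure submodules and pure quotients *)
  (forall (N M Q : lmodType R) (f : {linear N -> M}) (g : {linear M -> Q}),
      pure_short_exact f g -> FPn_injective n M ->
      FPn_injective n N /\ FPn_injective n Q).
Proof.
have n0 : (0 < n)%N by apply: ltn_trans hn.
split.
  move=> A B C f g hs hA hC F hF; case: (hF) => [k [d [e [es [ex0 exs]]]]].
  apply: (ext_of_cond es (ex0 n0)); apply: (cond_ext hs).
    exact: (cond_of_ext es (ex0 n0) (hA F hF)).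
  exact: (cond_of_ext es (ex0 n0) (hC F hF)).
split.
  move=> I M P p hp hM F hF; case: (hF) => [k [d [e [es [ex0 exs]]]]].
  apply: (ext_of_cond es (ex0 n0)); apply: (cond_prod hp) => i.
  exact: (cond_of_ext es (ex0 n0) (hM i F hF)).
split.
  move=> I le M f L u hds hdl hM F hF; case: (hF) => [k [d [e [es [ex0 exs]]]]].
  apply: (ext_of_cond es (ex0 n0)); apply: (cond_dirlim (exs 0%N hn) hds hdl) => i.
  exact: (cond_of_ext es (ex0 n0) (hM i F hF)).
move=> N M Q f g hp hM; split.
  move=> F hF; case: (hF) => [k [d [e [es [ex0 exs]]]]].
  have F1 : FPn 1 F.
    exists k, d, e; split=> //; split; first by move=> _; apply: ex0.
    by move=> i; rewrite ltnS ltn0.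
  apply: (ext_of_cond es (ex0 n0)); apply: (cond_pure_sub es (ex0 n0) F1 hp).
  exact: (cond_of_ext es (ex0 n0) (hM F hF)).
move=> F hF; case: (hF) => [k [d [e [es [ex0 exs]]]]].
apply: (ext_of_cond es (ex0 n0)); apply: (cond_pure_quot (exs 0%N hn) hp).
exact: (cond_of_ext es (ex0 n0) (hM F hF)).
Qed.
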